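(* For every finite field $\mathbb{F}_q$ and every pair of integers $s,t\ge1$, the linear code $C=\bigoplus_{i=1}^{s}\mathrm{Rep}_t(\mathbb{F}_q)\le\mathbb{F}_q^{st}$ is an abelian group code.
   Context: $\mathrm{Rep}_t(\mathbb{F}_q)=\{(\lambda,\dots,\lambda):\lambda\in\mathbb{F}_q\}\le\mathbb{F}_q^t$ is the repetition code; the direct sum consists of vectors in $\mathbb{F}_q^{st}$ formed by concatenating $s$ blocks, each block a constant vector of length $t$. Let $\mathcal{B}=\{e_1,\dots,e_n\}$ be the standard basis of $\mathbb{F}_q^n$. For a finite group $H$ of order $n$, a linear code $C\le\mathbb{F}_q^n$ is an $H$-code if there exists a bijection $\phi:\mathcal{B}\to H$ whose $\mathbb{F}_q$-linear extension $\tilde\phi:\mathbb{F}_q^n\to\mathbb{F}_q[H]$ maps $C$ onto a two-sided ideal of the group algebra $\mathbb{F}_q[H]$. $C$ is an abelian group code if it is an $H$-code for some abelian group $H$. *)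

(* Defs.v *)
From HB Require Import structures.
From mathcomp Require Import all_boot all_order all_algebra all_fingroup.
Set Implicit Arguments. Unset Strict Implicit. Unset Printing Implicit Defensive.
Import GRing.Theory.
Local Open Scope ring_scope.

(* Group algebra F[H] for a finite group gT (H = the whole group gT):
   elements are functions gT -> F, i.e. sum_g a(g) g. *)
Definition galg (F : fieldType) (gT : finGroupType) := {ffun gT -> F}.

Definition galg_mul (F : fieldType) (gT : finGroupType) (a b : {ffun gT -> F})
  : {ffun gT -> F} :=
  [ffun g => \sum_(h : gT) a h * b ((h^-1) * g)%g].

Definition two_sided_ideal (F : finFieldType) (gT : finGroupType)
  (I : {set {ffun gT -> F}}) : Prop :=
  [/\ (0 : {ffun gT -> F}) \in I,
      (forall x y, x \in I -> y \in I -> x + y \in I),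
      (forall x, x \in I -> - x \in I),
      (forall a x, x \in I -> galg_mul a x \in I) &
      (forall a x, x \in I -> galg_mul x a \in I)].

(* Linear extension of phi : B -> H, with the standard basis e_k identified
   with k : 'I_n:  v = sum_k v_k e_k  |->  sum_k v_k phi(e_k). *)
Definition lin_ext (F : fieldType) (gT : finGroupType) (n : nat)
  (phi : 'I_n -> gT) (v : 'rV[F]_n) : {ffun gT -> F} :=
  [ffun g => \sum_(k < n | phi k == g) v 0 k].

Definition is_H_code (F : finFieldType) (gT : finGroupType) (n : nat)
  (C : {set 'rV[F]_n}) : Prop :=
  #|gT| = n /\
  exists phi : 'I_n -> gT, bijective phi /\
    two_sided_ideal (lin_ext phi @: C).

Definition abelian_group_code (F : finFieldType) (n : nat)
  (C : {set 'rV[F]_n}) : Prop :=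
  exists gT : finGroupType, abelian [set: gT] /\ is_H_code gT C.

(* The direct sum of s copies of Rep_t(F) in F^(s*t): coordinate k lies
   in block k %/ t, and each block is a constant vector. *)
Definition rep_sum_code (F : finFieldType) (s t : nat) : {set 'rV[F]_(s * t)} :=
  [set v : 'rV[F]_(s * t) | [exists lam : 'rV[F]_s,
     [forall k : 'I_(s * t), forall i : 'I_s,
        ((k %/ t)%N == i) ==> (v 0 k == lam 0 i)]]].

(* Main.v *)
Require Import Defs.
From mathcomp Require Import all_boot all_order all_algebra all_fingroup.
From mathcomp Require Import zify.
Import GRing.Theory.
Local Open Scope ring_scope.

Lemma conv_rhs (F : finFieldType) (G1 G2 : finGroupType) (a x : {ffun (G1 * G2)%type -> F}) g :
  galg_mul x a g = \sum_(h : G1 * G2) x (g * h^-1)%g * a h.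
Proof.
rewrite /galg_mul ffunE (reindex_inj invg_inj) /=.
rewrite (reindex_inj (mulIg g^-1)%g) /=.
by apply: eq_bigr => h _; rewrite invgK mulgKV invMg invgK.
Qed.

Lemma fst_closed (F : finFieldType) (G1 G2 : finGroupType) (a x : {ffun (G1 * G2)%type -> F}) :
  (forall g g', g.1 = g'.1 -> x g = x g') ->
  forall g g', g.1 = g'.1 -> galg_mul a x g = galg_mul a x g' /\ galg_mul x a g = galg_mul x a g'.
Proof.
move=> Hx [g1 g2] [g1' g2'] /= e; subst g1'; split.
  rewrite !ffunE; apply: eq_bigr => -[h1 h2] _; congr (_ * _); exact: Hx.
rewrite !conv_rhs; apply: eq_bigr => -[h1 h2] _; congr (_ * _); exact: Hx.
Qed.

Theorem theorem3 (F : finFieldType) (s t : nat) (hs : (1 <= s)%N) (ht : (1 <= t)%N) :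
  abelian_group_code (rep_sum_code F s t).
Proof.
pose gT := ('I_s.-1.+1 * 'I_t.-1.+1)%type.
exists gT; split.
  apply/centsP => -[x1 x2] _ [y1 y2] _.
  rewrite /commute; congr (_, _); exact: Zp_addC.
have es : s.-1.+1 = s by lia.
have et : t.-1.+1 = t by lia.
split; first by rewrite card_prod !card_ord es et.
pose phi (k : 'I_(s * t)) : gT := (inord (k %/ t), inord (k %% t)).
have phi1 : forall k : 'I_(s * t), nat_of_ord (phi k).1 = (k %/ t)%N.
  move=> k /=; rewrite inordK // es ltn_divLR //; have := ltn_ord k; lia.
have phi2 : forall k : 'I_(s * t), nat_of_ord (phi k).2 = (k %% t)%N.
  move=> k /=; rewrite inordK // et ltn_mod; lia.
have phi_inj : injective phi.
  move=> k k' e; apply: val_inj => /=.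
  rewrite (divn_eq k t) (divn_eq k' t) -phi1 -phi2 -phi1 -phi2 e //.
have phi_bij : bijective phi.
  apply: (@inj_card_bij _ _ phi phi_inj). rewrite card_prod !card_ord es et //.
exists phi; split => //.
case: phi_bij => psi phiK psiK.
have linE : forall (v : 'rV[F]_(s * t)) (g : gT), lin_ext phi v g = v 0 (psi g).
  move=> v g; rewrite /lin_ext ffunE (big_pred1 (psi g)) // => k /=.
  apply/eqP/eqP => [<-|->] //.
pose P := fun y : {ffun gT -> F} => forall g g' : gT, g.1 = g'.1 -> y g = y g'.
have imP : forall y, (y \in lin_ext phi @: rep_sum_code F s t) <-> P y.
  move=> y; split.
    case/imsetP => v; rewrite inE => /existsP [lam /forallP Hl] ->.
    move=> g g' e; rewrite !linE.
    have H1 := Hl (psi g); have H2 := Hl (psi g').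
    have i_lt : ((psi g) %/ t < s)%N.
      rewrite ltn_divLR //; lia.
    move: (forallP H1 (Ordinal i_lt)) (forallP H2 (Ordinal i_lt)) => /= /implyP A /implyP B.
    rewrite (eqP (A (eqxx _))) (eqP (B _)) //.
    by rewrite -!phi1 !psiK e.
  move=> Py; apply/imsetP; exists (\row_k y (phi k)).
    rewrite inE; apply/existsP; exists (\row_i y (phi (psi (inord i, ord0)))).
    apply/forallP => k; apply/forallP => i; apply/implyP => /eqP e.
    rewrite !mxE psiK; apply/eqP; apply: Py; apply: val_inj; rewrite /= -/(nat_of_ord (phi k).1) phi1 e inordK //; have := ltn_ord i; lia.
  by apply/ffunP => g; rewrite linE mxE psiK.
split.
- apply/imP => g g' _; by rewrite !ffunE.
- move=> x y /imP Hx /imP Hy; apply/imP => g g' e; by rewrite !ffunE (Hx g g') ?(Hy g g').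
- move=> x /imP Hx; apply/imP => g g' e; by rewrite !ffunE (Hx g g').
- move=> a x /imP Hx; apply/imP => g g' e; exact: (proj1 (@fst_closed _ _ _ a x Hx _ _ e)).
- move=> a x /imP Hx; apply/imP => g g' e; exact: (proj2 (@fst_closed _ _ _ a x Hx _ _ e)).
Qed.
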